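(* Let $I_{RPC}=(V,E,T_f,c,p)$ be an RPCSTP instance and let $t_p,t_q,t_{\tilde p},t_{\tilde q}\in T_f$ (not necessarily distinct). Writing $R(t_a,t_b)$ for the feasible region of the LP relaxation of $PrizeRCut(I_{RPC},t_a,t_b)$, we have $$\mathrm{proj}_y\big(R(t_p,t_q)\big)=\mathrm{proj}_y\big(R(t_{\tilde p},t_{\tilde q})\big).$$
   Context: A rooted prize-collecting Steiner tree (RPCSTP) instance $(V,E,T_f,c,p)$ consists of a finite undirected connected graph $(V,E)$, $c:E\to\mathbb{Q}_{>0}$, $p:V\to\mathbb{Q}_{\ge0}$ and a nonempty set $T_f\subseteq V$ of fixed terminals (which must be contained in every feasible solution). Let $T_p:=\{v:p(v)>0\}$ and $T_p\setminus T_f=\{t_1,\dots,t_z\}$. Transformation 2 (RPCSTP to SAP), for $t_a,t_b\in T_f$: set $V':=V$, $A':=\{(v,w),(w,v):\{v,w\}\in E\}$ with $c'((v,w)):=c(\{v,w\})$; for each $i=1,\dots,z$ add a new vertex $t_i'$, an arc $(t_i,t_i')$ of cost $0$ and an arc $(t_a,t_i')$ of cost $p(t_i)$. Terminal set $T':=\{t_1',\dots,t_z'\}\cup T_f$, root $t_b$. The LP relaxation of $PrizeRCut(I_{RPC},t_a,t_b)$ has variables $x\in\mathbb{R}^{A'}$, $y\in\mathbb{R}^{E}$ and constraints: $x(\delta^-(U))\ge1$ for all $U\subset V'$ with $t_b\notin U$, $U\cap T'\neq\emptyset$ (where $\delta^-(U)$ is the set of arcs of $A'$ entering $U$ and $x(F)=\sum_{a\in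 F}x(a)$); $0\le x\le 1$; $y(\{v_i,v_j\})=x((v_i,v_j))+x((v_j,v_i))$ for all $\{v_i,v_j\}\in E$; $0\le y\le1$; objective $\min c'^Tx$. $\mathrm{proj}_y$ denotes projection onto the $y$-variables. *)

(* Defs.v *)
From HB Require Import structures.
From mathcomp Require Import all_boot all_order all_algebra.
Set Implicit Arguments. Unset Strict Implicit. Unset Printing Implicit Defensive.
Import Order.TTheory GRing.Theory Num.Theory.
Local Open Scope ring_scope.

Definition simple_edges (V : finType) (E : {set {set V}}) : Prop :=
  forall e, e \in E -> #|e| = 2%N.

Definition adj (V : finType) (E : {set {set V}}) : rel V :=
  fun v w => (v != w) && ([set v; w] \in E).

Definition connected_graph (V : finType) (E : {set {set V}}) : Prop :=
  forall v w : V, connect (adj E) v w.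

Definition edge (V : finType) (E : {set {set V}}) := {e : {set V} | e \in E}.

(* t is one of t_1..t_z, i.e. t in T_p \ T_f *)
Definition extra (V : finType) (p : V -> rat) (Tf : {set V}) (t : V) : bool :=
  (0 < p t) && (t \notin Tf).

(* Vertices of the SAP instance: inl v = original vertex v, inr t = new copy t'
   (only for t in T_p \ T_f). *)
Definition is_vtx (V : finType) (p : V -> rat) (Tf : {set V}) (u : V + V) : bool :=
  match u with inl _ => true | inr t => extra p Tf t end.

(* Terminal set T' = {t_1',...,t_z'} u T_f *)
Definition is_term (V : finType) (p : V -> rat) (Tf : {set V}) (u : V + V) : bool :=
  match u with inl t => t \in Tf | inr t => extra p Tf t end.

Definition is_arc (V : finType) (E : {set {set V}}) (p : V -> rat) (Tf : {set V})
    (ta : V) (a : (V + V) * (V + V)) : bool :=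
  match a with
  | (inl v, inl w) => adj E v w
  | (inl v, inr t) => extra p Tf t && ((v == t) || (v == ta))
  | _ => false
  end.

Definition arc (V : finType) (E : {set {set V}}) (p : V -> rat) (Tf : {set V}) (ta : V) :=
  {a : (V + V) * (V + V) | is_arc E p Tf ta a}.

Definition LP_region (R : realFieldType) (V : finType) (E : {set {set V}})
    (p : V -> rat) (Tf : {set V}) (ta tb : V)
    (x : {ffun arc E p Tf ta -> R}) (y : {ffun edge E -> R}) : Prop :=
  (forall U : {set V + V},
      U \subset [set u | is_vtx p Tf u] ->
      inl tb \notin U ->
      [exists u in U, is_term p Tf u] ->
      1 <= \sum_(a : arc E p Tf ta | ((val a).1 \notin U) && ((val a).2 \in U)) x a)
  /\ (forall a, 0 <= x a <= 1)
  /\ (forall (e : edge E) (a1 a2 : arc E p Tf ta) (v w : V),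
        val e = [set v; w] -> val a1 = (inl v, inl w) -> val a2 = (inl w, inl v) ->
        y e = x a1 + x a2)
  /\ (forall e, 0 <= y e <= 1).

Arguments LP_region {R V} E p Tf ta tb x y.

(* Main.v *)
Require Import Defs.
From HB Require Import structures.
From mathcomp Require Import all_boot all_order all_algebra.
From mathcomp Require Import ring lra zify.
Import Defs.
Set Implicit Arguments. Unset Strict Implicit. Unset Printing Implicit Defensive.
Import Order.TTheory GRing.Theory Num.Theory.
Local Open Scope ring_scope.
Section MF.
Variables (R : realFieldType) (T : finType).

Definition inflow (W : {set T}) (h : T -> T -> R) : R :=
  \sum_u \sum_v ((u \notin W) && (v \in W))%:R * h u v.
Definition outflow (W : {set T}) (h : T -> T -> R) : R :=
  \sum_u \sum_v ((u \in W) && (v \notin W))%:R * h u v.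
Definition net (h : T -> T -> R) v : R := \sum_u h u v - \sum_u h v u.

Lemma inflowD W h1 h2 : inflow W (fun a b => h1 a b + h2 a b) = inflow W h1 + inflow W h2.
Proof.
rewrite /inflow -big_split; apply: eq_bigr => u _ /=.
rewrite -big_split; apply: eq_bigr => v _ /=; by rewrite mulrDr.
Qed.

Lemma inflowZ W k h : inflow W (fun a b => k * h a b) = k * inflow W h.
Proof.
rewrite /inflow mulr_sumr; apply: eq_bigr => u _ /=.
rewrite mulr_sumr; apply: eq_bigr => v _ /=; by rewrite mulrCA.
Qed.

Lemma outflowD W h1 h2 : outflow W (fun a b => h1 a b + h2 a b) = outflow W h1 + outflow W h2.
Proof.
rewrite /outflow -big_split; apply: eq_bigr => u _ /=.
rewrite -big_split; apply: eq_bigr => v _ /=; by rewrite mulrDr.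
Qed.

Lemma outflowZ W k h : outflow W (fun a b => k * h a b) = k * outflow W h.
Proof.
rewrite /outflow mulr_sumr; apply: eq_bigr => u _ /=.
rewrite mulr_sumr; apply: eq_bigr => v _ /=; by rewrite mulrCA.
Qed.

Lemma netD h1 h2 v : net (fun a b => h1 a b + h2 a b) v = net h1 v + net h2 v.
Proof. rewrite /net !big_split /=; ring. Qed.

Lemma netZ k h v : net (fun a b => k * h a b) v = k * net h v.
Proof. rewrite /net -!mulr_sumr; ring. Qed.

Lemma net_sum (W : {set T}) h :
  \sum_v (v \in W)%:R * net h v = inflow W h - outflow W h.
Proof.
rewrite /net /inflow /outflow.
under eq_bigr => v _ do rewrite mulrBr !mulr_sumr.
rewrite sumrB exchange_big -!sumrB; apply: eq_bigr => u _.
rewrite -!sumrB; apply: eq_bigr => v _.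
by case: (u \in W); case: (v \in W); rewrite /= ?mul0r ?mul1r ?subr0 ?sub0r ?subrr.
Qed.

Lemma sum_eq1 (x : T) (b : bool) : \sum_u ((u == x) && b)%:R = b%:R :> R.
Proof.
rewrite (bigD1 x) //= eqxx big1 ?addr0 // => u /negbTE ->; by [].
Qed.

Lemma sum_ind_in (W : {set T}) (x : T) : \sum_v (v \in W)%:R * ((v == x)%:R : R) = (x \in W)%:R.
Proof.
rewrite (bigD1 x) //= eqxx mulr1 big1 ?addr0 // => u /negbTE ->; by rewrite mulr0.
Qed.

Definition isflow (c : T -> T -> R) s t lam (f : T -> T -> R) :=
  (forall u v, 0 <= f u v <= c u v) /\
  (forall v, net f v = lam * ((v == t)%:R - (v == s)%:R)).

Lemma flow_cut c s t lam f (W : {set T}) : isflow c s t lam f ->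
  inflow W f - outflow W f = lam * ((t \in W)%:R - (s \in W)%:R).
Proof.
move=> [_ hn]; rewrite -net_sum.
under eq_bigr => v _ do rewrite hn mulrCA.
rewrite -mulr_sumr; congr (_ * _).
under eq_bigr => v _ do rewrite mulrBr.
by rewrite sumrB !sum_ind_in.
Qed.

Lemma net_ext h1 h2 v : (forall u w, h1 u w = h2 u w) -> net h1 v = net h2 v.
Proof. by move=> e; rewrite /net (eq_bigr _ (fun u _ => e u v)) (eq_bigr _ (fun u _ => e v u)). Qed.

Definition gw (x : T) (p : seq T) : T -> T -> R :=
  fun u w => (count (pred1 (u, w)) (zip (x :: p) p))%:R.

Lemma net_arc x y v : net (fun u w => ((u, w) == (x, y))%:R) v = (v == y)%:R - (v == x)%:R :> R.
Proof.
rewrite /net.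
under eq_bigr => u _ do rewrite xpair_eqE.
under [X in _ - X]eq_bigr => u _ do rewrite xpair_eqE andbC.
by rewrite !sum_eq1.
Qed.

Lemma gw_net x p v : net (gw x p) v = (v == last x p)%:R - (v == x)%:R.
Proof.
elim: p x => [|y p IH] x.
  rewrite /net /gw /= !big1 ?subrr //.
rewrite (@net_ext _ (fun u w => ((u, w) == (x, y))%:R + gw y p u w)); last first.
  by move=> u w; rewrite /gw /= natrD eq_sym.
rewrite netD net_arc IH /=; ring.
Qed.


Lemma path_zip (e : rel T) x p u w : path e x p -> (u, w) \in zip (x :: p) p -> e u w.
Proof.
elim: p x => [|y p IH] x //= /andP[exy hp]; rewrite in_cons => /orP[/eqP[-> ->]//|].
exact: IH.
Qed.

Lemma minex (X : finType) (P : pred X) (F : X -> R) :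
  (exists x, P x) -> exists2 x, P x & forall y, P y -> F x <= F y.
Proof.
move=> [x0 Px0]; case: (arg_minP F Px0) => x Px hmin; exists x => //.
Qed.

Lemma zero_flow (c : T -> T -> R) s t lam : (forall a b, 0 <= c a b) ->
  lam = 0 \/ s = t ->
  isflow c s t lam (fun _ _ => 0).
Proof.
move=> hc h; split => [u v|v]; first by rewrite lexx hc.
rewrite /net !big1 // subrr.
by case: h => [->|->]; rewrite ?mul0r // subrr mulr0.
Qed.

Lemma inflowT (W : {set T}) h : inflow W (fun u v => h v u) = outflow W h.
Proof.
rewrite /inflow /outflow exchange_big; apply: eq_bigr => u _; apply: eq_bigr => v _.
by rewrite andbC.
Qed.

Lemma inflow_newE (W : {set T}) c f :
  inflow W (fun u v => c u v - f u v + f v u) = inflow W c - inflow W f + outflow W f.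
Proof.
transitivity (inflow W (fun a b => c a b + (-1) * f a b + f b a)).
  by apply: eq_bigr => u _; apply: eq_bigr => v _; rewrite mulN1r.
rewrite inflowD inflowD inflowZ (inflowT W f); ring.
Qed.

Variables (s t : T).
Definition posarcs (c : T -> T -> R) := [set a : T * T | 0 < c a.1 a.2].
Definition nontight (c : T -> T -> R) lam :=
  [set W : {set T} | (t \in W) && (s \notin W) && (lam < inflow W c)].
Definition meas c lam := (#|posarcs c| * #|{set T}|.+1 + #|nontight c lam|)%N.
Definition cutcond c lam := forall W : {set T}, t \in W -> s \notin W -> lam <= inflow W c.

Lemma submod c lam (W : {set T}) u v :
  cutcond c lam -> (forall a b, 0 <= c a b) -> inflow W c <= lam ->
  t \in W -> s \notin W -> u \in W -> v \notin W ->
  cutcond (fun a b => if (a == u) && (b == v) then 0 else c a b) lam.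
Proof.
move=> hcut hc hW tW sW uW vW W' tW' sW'.
have h1 : lam <= inflow (W :&: W') c by apply: hcut; rewrite in_setI ?tW ?tW' // negb_and sW.
have h2 : lam <= inflow (W :|: W') c by apply: hcut; rewrite in_setU ?tW // negb_or sW sW'.
set c' := fun a b => _.
have h3 : inflow (W :&: W') c + inflow (W :|: W') c <= inflow W c + inflow W' c'.
  rewrite /inflow -!big_split; apply: ler_sum => a _; rewrite -!big_split.
  apply: ler_sum => b _ /=; rewrite /c' !in_setI !in_setU.
  case: ifP => [/andP[/eqP-> /eqP->]|_].
    rewrite uW (negbTE vW) /=.
    by case: (u \in W'); case: (v \in W'); rewrite /= ?mul0r ?mulr0 ?addr0 ?lexx.
  have := hc a b.
  by case: (a \in W); case: (a \in W'); case: (b \in W); case: (b \in W');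
    rewrite /= ?mul0r ?mul1r ?add0r ?addr0 => h; lra.
lra.
Qed.


Lemma meas_lt1 (a a' b b' K : nat) : (a' < a)%N -> (b' <= K)%N ->
  (a' * K.+1 + b' < a * K.+1 + b)%N.
Proof. move=> h1 h2; nia. Qed.

Lemma meas_lt2 (a a' b b' K : nat) : (a' <= a)%N -> (b' < b)%N ->
  (a' * K.+1 + b' < a * K.+1 + b)%N.
Proof. move=> h1 h2; nia. Qed.

Lemma psum2 (F : T -> T -> R) : (forall a b, 0 <= F a b) ->
  0 < \sum_a \sum_b F a b -> exists a b, 0 < F a b.
Proof.
move=> hF hs.
have [a /andP[_ ha]] : exists a, predT a && (0 < \sum_b F a b).
  apply: psumr_neq0P => [a _|]; first by apply: sumr_ge0 => b _.
  by apply/eqP; rewrite gt_eqF.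
have [b /andP[_ hb]] : exists b, predT b && (0 < F a b).
  apply: psumr_neq0P => [b _|] //.
  by apply/eqP; rewrite gt_eqF.
by exists a, b.
Qed.

Lemma inflow_ge0 W h : (forall a b, 0 <= h a b) -> 0 <= inflow W h.
Proof. move=> hh; apply: sumr_ge0 => a _; apply: sumr_ge0 => b _; by rewrite mulr_ge0. Qed.
Lemma outflow_ge0 W h : (forall a b, 0 <= h a b) -> 0 <= outflow W h.
Proof. move=> hh; apply: sumr_ge0 => a _; apply: sumr_ge0 => b _; by rewrite mulr_ge0. Qed.

Lemma maxflow n : forall c lam, (meas c lam < n)%N -> (forall a b, 0 <= c a b) -> 0 <= lam ->
  cutcond c lam -> exists f, isflow c s t lam f.
Proof.
elim: n => // n IH c lam hm hc hl hcut.
have [est|hst] := eqVneq s t.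
  by exists (fun _ _ => 0); apply: zero_flow => //; right.
have [l0|hl0] := eqVneq lam 0.
  by exists (fun _ _ => 0); apply: zero_flow => //; left.
have hlp : 0 < lam by rewrite lt_def hl0 hl.
pose e := [rel a b | 0 < c a b].
have [hcon|hncon] := boolP (connect e s t); last first.
  pose W := [set v | ~~ connect e s v].
  have := hcut W; rewrite !inE hncon connect0 => /(_ isT isT).
  suff -> : inflow W c = 0 by rewrite leNgt hlp.
  apply: big1 => a _; apply: big1 => b _; rewrite !inE negbK.
  case: (boolP (connect e s a)) => hsa; case: (boolP (connect e s b)) => hsb /=; rewrite ?mul0r //.
  have: ~~ (0 < c a b).
    apply: contra hsb => hab; apply: connect_trans hsa (connect1 _); exact: hab.
  by rewrite -leNgt => h; rewrite mul1r; apply/eqP; rewrite eq_le h hc.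
move/connectP: hcon => [p hp htl].
pose g := gw s p.
have gnet v : net g v = (v == t)%:R - (v == s)%:R by rewrite /g gw_net -htl.
have g0 a b : 0 <= g a b by rewrite /g ler0n.
have gc a b : 0 < g a b -> 0 < c a b.
  rewrite /g ltr0n -has_count has_pred1 => hz; exact: (path_zip hp hz).
have gin (W : {set T}) : t \in W -> s \notin W -> inflow W g = 1 + outflow W g.
  move=> tW sW; have := net_sum W g.
  under eq_bigr => v _ do rewrite gnet mulrBr.
  rewrite sumrB !sum_ind_in tW (negbTE sW) => h.
  move: h; rewrite /= ?mulr1n ?mulr0n ?subr0 => h; lra.
case: (boolP [exists W : {set T}, (t \in W) && (s \notin W) && (inflow W c <= lam) && (0 < outflow W g)]) => [hA|hB].
  move/existsP: hA => [W /andP[/andP[/andP[tW sW] Wt] Wo]].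
  have [u [v]] : exists u v, 0 < ((u \in W) && (v \notin W))%:R * g u v.
    apply: psum2 => // a b; by rewrite mulr_ge0.
  case: (boolP ((u \in W) && (v \notin W))) => [/andP[uW vW]|]; last by rewrite mul0r ltxx.
  rewrite mul1r => guv.
  pose c' := fun a b => if (a == u) && (b == v) then 0 else c a b.
  have hc'c a b : c' a b <= c a b by rewrite /c'; case: ifP => // _; exact: hc.
  have hc'0 a b : 0 <= c' a b by rewrite /c'; case: ifP => // _; exact: hc.
  have [f [hf1 hf2]] : exists f, isflow c' s t lam f.
  apply: IH => //.
  - apply: leq_trans _ (hm : (meas c lam <= n)%N); rewrite /meas; apply: meas_lt1; last exact: max_card.
    apply: proper_card; apply/properP; split.
      by apply/subsetP => a; rewrite !inE => h; apply: lt_le_trans h (hc'c _ _).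
    exists (u, v); first by rewrite inE /=; exact: gc.
    by rewrite inE /c' /= !eqxx ltxx.
  - exact: (submod hcut hc Wt tW sW uW vW).
  exists f; split => // a b; have := hf1 a b => /andP[-> h] /=; exact: le_trans h (hc'c _ _).
have hBW (W : {set T}) : t \in W -> s \notin W -> 0 < outflow W g -> lam < inflow W c.
  move=> tW sW Wo; move/existsPn: hB => /(_ W); rewrite tW sW Wo andbT /=.
  by rewrite ltNge.
pose P := fun x : ((T * T) + {set T})%type => match x with
  | inl a => 0 < g a.1 a.2
  | inr W => (t \in W) && (s \notin W) && (0 < outflow W g) end.
pose F := fun x : ((T * T) + {set T})%type => match x with
  | inl a => c a.1 a.2 / g a.1 a.2
  | inr W => (inflow W c - lam) / outflow W g end.
have Pne : exists x, P x.
  have : net g t = 1 by rewrite gnet eqxx eq_sym (negbTE hst) /= ?mulr1n ?mulr0n subr0.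
  rewrite /net => h.
  have hs0 : 0 <= \sum_u g t u by apply: sumr_ge0.
  have hs1 : 0 < \sum_u g u t by lra.
  have [u /andP[_ hu]] : exists u, predT u && (0 < g u t).
    apply: psumr_neq0P => [u _|] //; by apply/eqP; rewrite gt_eqF.
  by exists (inl (u, t)).
have [x0 Px0 hmin] := minex F Pne.
have hx : (exists2 ab, P (inl ab) & F x0 = F (inl ab)) \/ (exists2 W0, P (inr W0) & F x0 = F (inr W0)).
  by case: x0 Px0 {hmin} => [ab|W0] h; [left|right]; [exists ab|exists W0].
have Fpos x : P x -> 0 < F x.
  case: x => [[a b]|W] /=.
    by move=> hg; apply: divr_gt0 => //; exact: gc.
  move=> /andP[/andP[tW sW] Wo]; apply: divr_gt0 => //; rewrite subr_gt0; exact: hBW.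
have gcase a b : g a b = 0 \/ 0 < g a b.
  by have := g0 a b; rewrite le_eqVlt => /orP[/eqP <-|]; [left|right].
case: (lerP (F x0) lam) => hlF; last first.
  exists (fun a b => lam * g a b); split.
  + move=> a b; rewrite mulr_ge0 //=.
    have [->|gp] := gcase a b; first by rewrite mulr0.
    have := hmin (inl (a, b)) gp; rewrite /= => h.
    by rewrite -ler_pdivlMr //; apply: le_trans h; apply: ltW.
  + by move=> v; rewrite netZ gnet.
set d := F x0.
have hd : 0 < d by exact: Fpos.
pose c' := fun a b => c a b + (- d) * g a b.
have hdg a b : d * g a b <= c a b.
  have [->|gp] := gcase a b; first by rewrite mulr0.
  have := hmin (inl (a, b)) gp; rewrite /= => h.
  by rewrite -ler_pdivlMr.
have hc'0 a b : 0 <= c' a b by rewrite /c' mulNr subr_ge0.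
have hdg0 a b : 0 <= d * g a b by rewrite mulr_ge0 // ltW.
have hc'c a b : c' a b <= c a b by rewrite /c' mulNr gerBl.
have hin (W : {set T}) : t \in W -> s \notin W -> inflow W c' = inflow W c - d * (1 + outflow W g).
  by move=> tW sW; rewrite /c' inflowD inflowZ gin //; ring.
have hcut' : cutcond c' (lam - d).
  move=> W tW sW; rewrite hin //.
  have := hcut W tW sW.
  have := outflow_ge0 W g0; rewrite le_eqVlt => /orP[/eqP o0| opos].
    by rewrite -o0 addr0 mulr1 => h; lra.
  have PW : P (inr W) by rewrite /= tW sW opos.
  have := hmin (inr W) PW; rewrite /= ler_pdivlMr // => h1 h2.
  rewrite mulrDr mulr1; rewrite -/d in h1; lra.
have [f [hf1 hf2]] : exists f, isflow c' s t (lam - d) f.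
  apply: IH; [|by []|by rewrite subr_ge0|by []].
  apply: leq_trans _ (hm : (meas c lam <= n)%N); rewrite /meas.
  have hsub : posarcs c' \subset posarcs c.
    by apply/subsetP => a; rewrite !inE => h; apply: lt_le_trans h (hc'c _ _).
  case: hx => [[[a b] Pa hdx]|[W0 Pa hdx]]; rewrite /= in Pa hdx.
    apply: meas_lt1; last exact: max_card.
    apply: proper_card; apply/properP; split => //.
    exists (a, b); first by rewrite inE /=; exact: gc.
    rewrite inE /= /c' /d hdx mulNr divfK ?subrr ?ltxx //.
    by rewrite gt_eqF.
  apply: meas_lt2; first exact: subset_leq_card.
  move: Pa => /andP[/andP[tW0 sW0] W0o].
  apply: proper_card; apply/properP; split.
    apply/subsetP => W; rewrite !inE => /andP[/andP[tW sW] hW].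
    rewrite tW sW /=; move: hW; rewrite hin //.
    have := hdg0. have := outflow_ge0 W g0 => ho _ h.
    have : 0 <= d * outflow W g by rewrite mulr_ge0 // ltW.
    rewrite mulrDr mulr1 in h; lra.
  exists W0; first by rewrite inE tW0 sW0 /=; exact: hBW.
  rewrite inE tW0 sW0 /= hin // /d hdx mulrDr mulr1 divfK ?gt_eqF //.
  by rewrite ltNge; apply/negP => /negP; apply; rewrite le_eqVlt; apply/orP; left; apply/eqP; ring.
exists (fun a b => f a b + d * g a b); split.
  move=> a b; have := hf1 a b => /andP[h1 h2].
  rewrite addr_ge0 //=; move: h2; rewrite /c' mulNr => h2; lra.
by move=> v; rewrite netD netZ hf2 gnet; ring.
Qed.

End MF.

Section Main.
Variables (R : realFieldType) (V : finType) (E : {set {set V}}) (p : V -> rat) (Tf : {set V}).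

Definition XX ta (x : {ffun arc E p Tf ta -> R}) (z : (V + V) * (V + V)) : R :=
  if @insub _ (is_arc E p Tf ta) (arc E p Tf ta) z is Some a then x a else 0.

Lemma XX_val ta (x : {ffun arc E p Tf ta -> R}) (a : arc E p Tf ta) : XX x (val a) = x a.
Proof. by rewrite /XX valK. Qed.

Lemma XX_nar ta (x : {ffun arc E p Tf ta -> R}) z : ~~ is_arc E p Tf ta z -> XX x z = 0.
Proof. by move=> h; rewrite /XX insubN. Qed.

Lemma sum_arc ta (F : arc E p Tf ta -> R) (Q : pred ((V + V) * (V + V))) :
  \sum_(a : arc E p Tf ta | Q (val a)) F a =
  \sum_(z | Q z) (if @insub _ (is_arc E p Tf ta) (arc E p Tf ta) z is Some a then F a else 0).
Proof.
rewrite [RHS](bigID (is_arc E p Tf ta)) /= [X in _ = _ + X]big1 ?addr0; last first.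
  by move=> z /andP[_ h]; rewrite insubN.
rewrite (reindex_omap (val : arc E p Tf ta -> _) insub); last by move=> z /andP[_ h]; rewrite insubT.
apply: eq_big => [a|a _]; last by rewrite valK.
by rewrite valK eqxx (valP a) !andbT.
Qed.

Lemma inflow_pair (U : {set V + V}) (G : (V + V) * (V + V) -> R) :
  inflow U (fun u v => G (u, v)) = \sum_(z | (z.1 \notin U) && (z.2 \in U)) G z.
Proof.
rewrite /inflow pair_big [RHS]big_mkcond /=; apply: eq_bigr => -[u v] _ /=.
by case: ifP; rewrite ?mul1r ?mul0r.
Qed.


Lemma XX_ge0 ta (x : {ffun arc E p Tf ta -> R}) z : (forall a, 0 <= x a <= 1) -> 0 <= XX x z.
Proof. by move=> h; rewrite /XX; case: insub => [a|] //; case/andP: (h a). Qed.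

Lemma adjC v w : adj E v w = adj E w v.
Proof. by rewrite /adj eq_sym setUC. Qed.

Lemma dir tp tq tp' tq' (htp' : tp' \in Tf) (htq' : tq' \in Tf) (y : {ffun edge E -> R}) :
  (exists x, LP_region E p Tf tp tq x y) -> exists x, LP_region E p Tf tp' tq' x y.
Proof.
move=> [x [h1 [h2 [h3 h4]]]].
pose capE := fun u v : V + V => match u, v with inl _, inl _ => XX x (u, v) | _, _ => 0 end.
have capE0 u v : 0 <= capE u v.
  by case: u => u; case: v => v //=; apply: XX_ge0.
have oldcut (U : {set V + V}) : inl tq \notin U -> (exists2 t0, t0 \in Tf & inl t0 \in U) ->
    1 <= inflow U capE.
  move=> sU [t0 t0T t0U].
  pose U0 := [set z : V + V | if z is inl v then inl v \in U else false].
  have := h1 U0.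
  have -> : \sum_(a : arc E p Tf tp | ((val a).1 \notin U0) && ((val a).2 \in U0)) x a
      = inflow U0 (fun u v => XX x (u, v)).
    by rewrite inflow_pair (@sum_arc tp (fun a => x a) (fun z => (z.1 \notin U0) && (z.2 \in U0))).
  have -> : inflow U0 (fun u v => XX x (u, v)) = inflow U capE.
    apply: eq_bigr => u _; apply: eq_bigr => v _.
    case: u => u; case: v => v; rewrite /capE !inE /= ?andbF ?mulr0 ?mul0r //.
    by rewrite XX_nar ?mulr0.
  apply.
  - by apply/subsetP => -[v|v]; rewrite !inE.
  - by rewrite inE.
  - by apply/existsP; exists (inl t0); rewrite inE t0U /=.
have [f hf] : exists f, isflow capE (inl tq) (inl tq') 1 f.
  apply: (@maxflow R _ (inl tq) (inl tq') (meas (inl tq) (inl tq') capE 1).+1) => //.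
  move=> W tW sW; apply: oldcut => //; by exists tq'.
have [hf1 hf2] := hf.
pose newE := fun u v => capE u v - f u v + f v u.
have fz u v : capE u v = 0 -> f u v = 0.
  by move=> h; have := hf1 u v; rewrite h => /andP[a b]; apply/eqP; rewrite eq_le a b.
have newE_nar u v : ~~ is_arc E p Tf tp' (u, v) -> newE u v = 0.
  rewrite /newE; case: u => u; case: v => v; last 3 first.
  - by move=> _; rewrite !fz // subrr addr0.
  - by move=> _; rewrite !fz // subrr addr0.
  - by move=> _; rewrite !fz // subrr addr0.
  move=> hna; have hna' : ~~ adj E v u by rewrite adjC.
  have e1 : capE (inl u) (inl v) = 0 by rewrite /capE XX_nar.
  have e2 : capE (inl v) (inl u) = 0 by rewrite /capE XX_nar.
  by rewrite e1 (fz _ _ e1) (fz _ _ e2) subrr addr0.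
have hsum v w (hvw : adj E v w) : capE (inl v) (inl w) + capE (inl w) (inl v) = y (Sub [set v; w] (proj2 (andP hvw))).
  have hwv : adj E w v by rewrite adjC.
  rewrite (h3 _ (Sub (inl v, inl w) hvw : arc E p Tf tp) (Sub (inl w, inl v) hwv) v w) //.
  by rewrite -!XX_val.
pose x' : {ffun arc E p Tf tp' -> R} := [ffun a => match val a with (inl v, inl w) => newE (inl v) (inl w) | _ => 1 end].
have hx'2 a : 0 <= x' a <= 1.
  rewrite ffunE; case: a => -[[v|v] [w|w]] ha /=; rewrite ?ler01 ?lexx //.
  have := hf1 (inl v) (inl w); have := hf1 (inl w) (inl v).
  have := h4 (Sub [set v; w] (proj2 (andP ha))); rewrite -hsum => /andP[y0 y1].
  rewrite /newE => /andP[a1 a2] /andP[b1 b2]; apply/andP; split; lra.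
exists x'; split; last split => //; last split => //.
  move=> U Usub tU /existsP [u0 /andP[u0U u0T]].
  case: (boolP [exists a : arc E p Tf tp', ((val a).1 \notin U) && ((val a).2 \in U) &&
          ~~ (if val a is (inl _, inl _) then true else false)]) => [/existsP [a /andP[/andP[a1 a2] a3]] | hno].
    rewrite (bigD1 a) ?a1 ?a2 //=.
    have -> : x' a = 1 by rewrite ffunE; move: a3; case: (val a) => -[?|?] [?|?].
    rewrite lerDl; apply: sumr_ge0 => b _; by case/andP: (hx'2 b).
  have E1 : \sum_(a : arc E p Tf tp' | ((val a).1 \notin U) && ((val a).2 \in U)) x' a = inflow U newE.
    rewrite (inflow_pair U (fun z => newE z.1 z.2)) (@sum_arc tp' (fun a => x' a) (fun z => (z.1 \notin U) && (z.2 \in U))); apply: eq_bigr => z hz.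
    case hi: insub => [a|].
      have hv := insubK (arc E p Tf tp') z; rewrite hi /= in hv.
      have hv' : val a = z by [].
      rewrite ffunE hv'; move/existsPn: hno => /(_ a); rewrite hv' hz /= negbK.
      by case: z {hz hi hv hv'} => -[?|?] [?|?].
    rewrite newE_nar //; apply/negP => hz'; move: hi; case: z hz' {hz} => u v hz'; by rewrite (insubT _ hz').
  rewrite E1 /newE inflow_newE.
  have := flow_cut U hf; rewrite (negbTE tU) mul1r /= ?mulr0n sub0r => hfc.
  case: (boolP (inl tq \in U)) => hsU.
    move: hfc; rewrite hsU /= ?mulr1n => hfc.
    have := inflow_ge0 U capE0; lra.
  move: hfc; rewrite (negbTE hsU) /= ?mulr0n oppr0 => hfc.
  suff : 1 <= inflow U capE by lra.
  apply: oldcut => //.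
  case: u0 u0U u0T => t0 u0U u0T; first by exists t0.
  exists tp' => //.
  have ha : is_arc E p Tf tp' (inl tp', inr t0) by rewrite /= eqxx orbT andbT; exact: u0T.
  move/existsPn: hno => /(_ (Sub (inl tp', inr t0) ha)) /=.
  by rewrite u0U !andbT negbK.
move=> e a1 a2 v w he ha1 ha2; rewrite !ffunE ha1 ha2.
have hvw : adj E v w by have := valP a1; rewrite ha1.
have hwv : adj E w v by rewrite adjC.
rewrite (h3 e (Sub (inl v, inl w) hvw : arc E p Tf tp) (Sub (inl w, inl v) hwv) v w he) //.
rewrite -!XX_val /newE /capE /=; ring.
Qed.

End Main.

Theorem proposition7 (R : realFieldType) (V : finType) (E : {set {set V}})
    (Tf : {set V}) (c : edge E -> rat) (p : V -> rat)
    (hE : simple_edges E) (hconn : connected_graph E)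
    (hc : forall e, 0 < c e) (hp : forall v, 0 <= p v) (hTf : Tf != set0)
    (tp tq tp' tq' : V)
    (htp : tp \in Tf) (htq : tq \in Tf) (htp' : tp' \in Tf) (htq' : tq' \in Tf) :
  forall y : {ffun edge E -> R},
    (exists x, LP_region E p Tf tp tq x y) <-> (exists x, LP_region E p Tf tp' tq' x y).
Proof.
move=> y; split; exact: dir.
Qed.
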